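(* Let $\mathrm{pr}:\mathrm{GL}_3(A)\to\mathrm{GL}_3(\mathbb{F}_q)$ be reduction modulo $t$. For integers $0\le j\le k$, $$\mathrm{pr}(\mathrm{GL}_3(A)_{[j,k]})=\begin{cases}\mathrm{GL}_3(\mathbb{F}_q)&\text{if }0=j=k,\\ P_0&\text{if }0=j<k,\\ P_2&\text{if }0<j=k,\\ B&\text{if }0<j<k.\end{cases}$$ For a higher-dimensional simplex $w$ all of whose vertices are of the form $[j,k]$ with $0\le j\le k$, $\mathrm{pr}(\mathrm{GL}_3(A)_w)=\bigcap_{v\in w}\mathrm{pr}(\mathrm{GL}_3(A)_v)$.
   Context: Let $q$ be a prime power, $A=\mathbb{F}_q[t]$, $F_\infty=\mathbb{F}_q((1/t))$, $\pi=1/t$, $\mathcal{O}_\infty=\mathbb{F}_q[[\pi]]$. $\mathcal{B}$ is the Bruhat–Tits building of $\mathrm{PGL}_3(F_\infty)$ (vertices: homothety classes of $\mathcal{O}_\infty$-lattices in $F_\infty^3$; simplices: sets $\{v_0,\dots,v_k\}$ with representatives $L_0\supsetneq\cdots\supsetneq L_k\supsetneq\pi L_0$), with $\mathrm{GL}_3(A)$ acting by $g[L]=[gL]$; $\mathrm{GL}_3(A)_w$ is the stabilizer of $w$. $[j,k]$ is the class of the lattice spanned by $e_1,\pi^je_2,\pi^ke_3$. $B\subset\mathrm{GL}_3(\mathbb{F}_q)$ is the group of invertible upper triangular matrices; $P_0$ is the group of $(a_{rs})\in\mathrm{GL}_3(\mathbb{F}_q)$ with $a_{31}=a_{32}=0$;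 $P_2$ is the group with $a_{21}=a_{31}=0$. *)

(* Defs.v *)
From HB Require Import structures.
From mathcomp Require Import all_boot all_order all_algebra.
Set Implicit Arguments. Unset Strict Implicit. Unset Printing Implicit Defensive.
Import Order.TTheory GRing.Theory Num.Theory.
Local Open Scope ring_scope.

(* F is the finite field F_q; A = {poly F} = F_q[t].
   An element of F_oo = F_q((pi)), pi = 1/t, is modelled by its coefficient
   function z : int -> F (z i = coefficient of pi^i); all elements of the
   lattices considered below have support bounded below, as they should.
   A vector of F_oo^3 is a function 'I_3 -> int -> F. *)

Section Defs.
Variable F : finFieldType.

Definition vec := 'I_3 -> int -> F.
Definition lattice := vec -> Prop.

(* action of p in A = F[t] (t = pi^-1) on an element of F_oo *)
Definition polyact (p : {poly F}) (z : int -> F) : int -> F :=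
  fun i => \sum_(m < size p) p`_m * z (i + (m : nat)%:Z).

Definition mxact (g : 'M[{poly F}]_3) (x : vec) : vec :=
  fun r i => \sum_(s < 3) polyact (g r s) (x s) i.

(* multiplication by pi^n *)
Definition shift (n : int) (x : vec) : vec := fun r i => x r (i - n).

(* exponent of pi on the r-th basis vector of the lattice [j,k] *)
Definition dexp (j k : nat) (r : 'I_3) : int :=
  match val r with 0%N => 0 | 1%N => j%:Z | _ => k%:Z end.

(* the O_oo-lattice spanned by e1, pi^j e2, pi^k e3 *)
Definition lat (j k : nat) : lattice :=
  fun x => forall r i, i < dexp j k r -> x r i = 0.

Definition sameset (L1 L2 : lattice) := forall y, L1 y <-> L2 y.
Definition ssup (L1 L2 : lattice) :=
  (forall y, L2 y -> L1 y) /\ exists y, L1 y /\ ~ L2 y.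

Definition img (g : 'M[{poly F}]_3) (L : lattice) : lattice :=
  fun y => exists x, L x /\ y = mxact g x.
Definition homot (n : int) (L : lattice) : lattice :=
  fun y => exists x, L x /\ y = shift n x.

Definition maps_to (g : 'M[{poly F}]_3) (v v' : nat * nat) :=
  exists n : int, sameset (img g (lat v.1 v.2)) (homot n (lat v'.1 v'.2)).

Definition GL3A (g : 'M[{poly F}]_3) := g \in unitmx.

Definition stab_vertex (j k : nat) (g : 'M[{poly F}]_3) :=
  GL3A g /\ maps_to g (j, k) (j, k).

Definition stab_simplex (w : seq (nat * nat)) (g : 'M[{poly F}]_3) :=
  GL3A g /\ forall v, v \in w -> exists2 v', v' \in w & maps_to g v v'.

Definition pr (g : 'M[{poly F}]_3) : 'M[F]_3 := map_mx (fun p => p.[0]) g.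

Definition pr_stab (j k : nat) (h : 'M[F]_3) :=
  exists g, stab_vertex j k g /\ pr g = h.

(* w (list of distinct vertices [j,k]) is a simplex: for some ordering of
   its vertices and some representatives L_0 ⊋ L_1 ⊋ ... ⊋ L_m ⊋ pi L_0. *)
Definition is_simplex (w : seq (nat * nat)) :=
  uniq w /\
  exists (s : seq (nat * nat)) (ns : seq int),
    perm_eq s w /\ size ns = size s /\
    let Ls := fun i => homot (nth 0 ns i) (lat (nth (0%N, 0%N) s i).1
                                                 (nth (0%N, 0%N) s i).2) in
    (forall i, (i.+1 < size s)%N -> ssup (Ls i) (Ls i.+1)) /\
    ssup (Ls (size s).-1) (homot 1 (Ls 0%N)).

Definition i0 : 'I_3 := @Ordinal 3 0 isT.
Definition i1 : 'I_3 := @Ordinal 3 1 isT.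
Definition i2 : 'I_3 := @Ordinal 3 2 isT.

Definition inB (h : 'M[F]_3) :=
  h \in unitmx /\ h i1 i0 = 0 /\ h i2 i0 = 0 /\ h i2 i1 = 0.
Definition inP0 (h : 'M[F]_3) := h \in unitmx /\ h i2 i0 = 0 /\ h i2 i1 = 0.
Definition inP2 (h : 'M[F]_3) := h \in unitmx /\ h i1 i0 = 0 /\ h i2 i0 = 0.

End Defs.

(* Main.v *)
Require Import Defs.
From mathcomp Require Import all_boot all_order all_algebra.
From mathcomp Require Import zify ring perm.
From Stdlib Require Import FunctionalExtensionality.
Set Implicit Arguments. Unset Strict Implicit. Unset Printing Implicit Defensive.
Import Order.TTheory GRing.Theory Num.Theory.
Local Open Scope ring_scope.

Lemma polyactE (F : finFieldType) (p : {poly F}) z i N : (size p <= N)%N ->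
  polyact p z i = \sum_(m < N) p`_m * z (i + (m:nat)%:Z).
Proof.
move=> hN; rewrite /polyact (big_ord_widen N (fun m => p`_m * z (i + (m:nat)%:Z))) //.
rewrite big_mkcond /=; apply: eq_bigr => m _; case: ltnP => // hm.
by rewrite nth_default // mul0r.
Qed.

Lemma polyactD (F : finFieldType) (p q : {poly F}) z i :
  polyact (p + q) z i = polyact p z i + polyact q z i.
Proof.
set N := maxn (size p) (size q).
rewrite !(@polyactE _ _ _ _ N) ?leq_maxl ?leq_maxr ?(leq_trans (size_polyD _ _)) //.
by rewrite -big_split /=; apply: eq_bigr => m _; rewrite coefD mulrDl.
Qed.

Lemma polyact0 (F : finFieldType) z i : polyact (0 : {poly F}) z i = 0.
Proof. by rewrite /polyact size_poly0 big_ord0. Qed.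

Lemma polyactZ (F : finFieldType) (c : F) (q : {poly F}) z i :
  polyact (c *: q) z i = c * polyact q z i.
Proof.
rewrite !(@polyactE _ _ _ _ (size q)) ?size_scale_leq //.
by rewrite mulr_sumr; apply: eq_bigr => m _; rewrite coefZ mulrA.
Qed.

Lemma polyactC (F : finFieldType) (c : F) z i :
  polyact c%:P z i = c * z i.
Proof.
rewrite (@polyactE _ _ _ _ 1) ?size_polyC ?leq_b1 //.
by rewrite big_ord1 coefC /= addr0.
Qed.

Lemma polyactX (F : finFieldType) (q : {poly F}) z i :
  polyact ('X * q) z i = polyact q z (i + 1).
Proof.
rewrite (@polyactE _ _ _ _ (size q).+1); last first.
  have [->|nz] := eqVneq q 0; first by rewrite mulr0 size_poly0.
  by rewrite mulrC size_mulX.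
rewrite big_ord_recl coefXM /= mul0r add0r /polyact.
apply: eq_bigr => m _; rewrite coefXM /=; congr (_ * z _).
rewrite /bump /=; lia.
Qed.

Lemma polyact_shift (F : finFieldType) (p : {poly F}) z i :
  polyact p (fun k => z (k + 1)) i = polyact p z (i + 1).
Proof. by apply: eq_bigr => m _; rewrite addrAC. Qed.

Lemma polyactM (F : finFieldType) (p q : {poly F}) z i :
  polyact (p * q) z i = polyact p (polyact q z) i.
Proof.
elim/poly_ind: p q z i => [|p c IH] q z i; first by rewrite mul0r !polyact0.
have -> : (p * 'X + c%:P) * q = p * ('X * q) + c *: q by rewrite -mul_polyC; ring.
rewrite polyactD polyactZ IH polyactD polyactC.
have -> : polyact ('X * q) z = fun k => polyact q z (k + 1).
  by apply: functional_extensionality => k; rewrite polyactX.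
rewrite polyact_shift; congr (_ + _).
  by rewrite -polyactX mulrC.
Qed.

Lemma polyact_sumz (F : finFieldType) (p : {poly F}) n (f : 'I_n -> int -> F) i :
  polyact p (fun k => \sum_(s < n) f s k) i = \sum_(s < n) polyact p (f s) i.
Proof.
rewrite /polyact; under eq_bigr do rewrite mulr_sumr.
by rewrite exchange_big.
Qed.

Lemma polyact_sump (F : finFieldType) n (P : 'I_n -> {poly F}) z i :
  polyact (\sum_(t < n) P t) z i = \sum_(t < n) polyact (P t) z i.
Proof.
apply: (big_morph (fun p => polyact p z i)); first by move=> ? ?; rewrite polyactD.
exact: polyact0.
Qed.

Lemma mxactM (F : finFieldType) (g h : 'M[{poly F}]_3) x :
  mxact g (mxact h x) = mxact (g * h) x.
Proof.
apply: functional_extensionality => r; apply: functional_extensionality => i.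
rewrite /mxact; under eq_bigr do rewrite polyact_sumz.
rewrite exchange_big /=; apply: eq_bigr => s _.
by rewrite mxE polyact_sump; apply: eq_bigr => t _; rewrite polyactM.
Qed.

Lemma mxact_scalar (F : finFieldType) (c : F) x :
  mxact (c%:P)%:M x = fun r i => c * x r i.
Proof.
apply: functional_extensionality => r; apply: functional_extensionality => i.
rewrite /mxact (bigD1 r) //= big1 ?addr0 => [|s /negPf ns]; rewrite mxE.
  by rewrite eqxx mulr1n polyactC.
by rewrite eq_sym ns mulr0n polyact0.
Qed.

Lemma mxact_const (F : finFieldType) (h : 'M[F]_3) x :
  mxact (map_mx polyC h) x = fun r i => \sum_(s < 3) h r s * x s i.
Proof.
apply: functional_extensionality => r; apply: functional_extensionality => i.
by apply: eq_bigr => s _; rewrite mxE polyactC.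
Qed.

Definition DL (F : finFieldType) (a : 'I_3 -> int) : lattice F :=
  fun x => forall r i, i < a r -> x r i = 0.

Definition ev (F : finFieldType) (s : 'I_3) (e : int) : vec F :=
  fun r i => if (r == s) && (i == e) then 1 else 0.

Lemma ev_DL (F : finFieldType) a s : DL a (ev F s (a s)).
Proof.
move=> r i hi; rewrite /ev; case: (r =P s) => //= E; subst r.
case: (i =P a s) => // E; by move: hi; rewrite E ltxx.
Qed.

Lemma polyact_delta (F : finFieldType) (p : {poly F}) e (m : nat) :
  polyact p (fun i => if i == e then 1 else 0) (e - m%:Z) = p`_m.
Proof.
rewrite /polyact.
case: (ltnP m (size p)) => hm.
  rewrite (bigD1 (Ordinal hm)) //= big1 ?addr0 => [|k nk].
    by rewrite subrK eqxx mulr1.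
  case: eqP; rewrite ?mulr0 // => E; case/eqP: nk; apply: val_inj => /=; lia.
rewrite nth_default // big1 // => k _; case: eqP; rewrite ?mulr0 // => E.
have := ltn_ord k; lia.
Qed.

Lemma mxact_ev (F : finFieldType) (g : 'M[{poly F}]_3) r s e (m : nat) :
  mxact g (ev F s e) r (e - m%:Z) = (g r s)`_m.
Proof.
rewrite /mxact (bigD1 s) //= big1 ?addr0 => [|t nt].
  rewrite -(polyact_delta (g r s) e m); congr polyact.
  by apply: functional_extensionality => i; rewrite /ev eqxx.
have -> : ev F s e t = fun _ => 0.
  by apply: functional_extensionality => i; rewrite /ev (negPf nt).
by rewrite /polyact big1 // => k _; rewrite mulr0.
Qed.

Definition bnd (F : finFieldType) (p : {poly F}) (e : int) :=
  forall m : nat, e < m%:Z -> p`_m = 0.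

Lemma incl_bnd (F : finFieldType) (g : 'M[{poly F}]_3) a b :
  (forall x, DL a x -> DL b (mxact g x)) ->
  forall r s, bnd (g r s) (a s - b r).
Proof.
move=> H r s m hm; rewrite -(mxact_ev g r s (a s) m).
apply: H; first exact: ev_DL.
lia.
Qed.

Lemma bnd_le (F : finFieldType) (p : {poly F}) e e' : e <= e' -> bnd p e -> bnd p e'.
Proof. move=> h H m hm; apply: H; lia. Qed.

Lemma bnd_add (F : finFieldType) (p q : {poly F}) e : bnd p e -> bnd q e -> bnd (p + q) e.
Proof. by move=> hp hq m hm; rewrite coefD hp ?hq ?addr0. Qed.

Lemma bnd_0 (F : finFieldType) e : bnd (0 : {poly F}) e.
Proof. by move=> m _; rewrite coef0. Qed.

Lemma bnd_1 (F : finFieldType) : bnd (1 : {poly F}) 0.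
Proof. move=> m hm; rewrite coef1; case: eqP => // E; lia. Qed.

Lemma bnd_C (F : finFieldType) (c : F) : bnd c%:P 0.
Proof. move=> m hm; rewrite coefC; case: eqP => // E; lia. Qed.

Lemma bnd_mul (F : finFieldType) (p q : {poly F}) e1 e2 :
  bnd p e1 -> bnd q e2 -> bnd (p * q) (e1 + e2).
Proof.
move=> hp hq m hm; rewrite coefM big1 // => l _.
case: (ltP e1 (l : nat)%:Z) => h; first by rewrite hp ?mul0r.
have hl := ltn_ord l.
rewrite hq ?mulr0 //; lia.
Qed.

Lemma bnd_sign (F : finFieldType) (k : nat) : bnd ((-1) ^+ k : {poly F}) 0.
Proof.
elim: k => [|k IH]; first by rewrite expr0; exact: bnd_1.
rewrite exprS; have := bnd_mul (bnd_C (-1)) IH.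
by rewrite addr0 polyCN polyC1.
Qed.

Lemma bnd_prod (F : finFieldType) n (P : 'I_n -> {poly F}) (E : 'I_n -> int) :
  (forall i, bnd (P i) (E i)) -> bnd (\prod_i P i) (\sum_i E i).
Proof.
move=> H; pose K := fun e p => @bnd F p e.
change (K (\sum_i E i) (\prod_i P i)); apply: big_rec2; first exact: bnd_1.
move=> i e p _ hp; exact: (bnd_mul (H i) hp).
Qed.

Lemma det_bnd (F : finFieldType) n (A : 'M[{poly F}]_n) (x y : 'I_n -> int) :
  (forall i j, bnd (A i j) (x j - y i)) ->
  bnd (\det A) (\sum_i x i - \sum_i y i).
Proof.
move=> H; rewrite /determinant.
apply: (big_ind (fun p => bnd p _)); [exact: bnd_0 | by move=> ? ? ; exact: bnd_add |].
move=> s _; rewrite -(add0r (_ - _)); apply: bnd_mul; first exact: bnd_sign.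
have -> : \sum_i x i - \sum_i y i = \sum_i (x ((s : perm.perm_of 'I_n) i) - y i).
  rewrite sumrB; congr (_ - _).
  by rewrite (reindex_inj (@perm_inj _ s)).
by apply: bnd_prod => i; apply: H.
Qed.

Lemma GL3A_det (F : finFieldType) (g : 'M[{poly F}]_3) :
  GL3A g -> exists2 c : F, c != 0 & \det g = c%:P.
Proof.
rewrite /GL3A unitmxE poly_unitE => /andP[/eqP hs hu].
exists (\det g)`_0; first by rewrite -unitfE.
by apply: size1_polyC; rewrite hs.
Qed.

Lemma bnd_C_ge0 (F : finFieldType) (c : F) e : c != 0 -> bnd c%:P e -> 0 <= e.
Proof.
move=> nc H; case: (lerP 0 e) => // he.
by move: (H 0%N); rewrite coefC eqxx => /(_ he) E; rewrite E eqxx in nc.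
Qed.

Lemma sum3 (a : 'I_3 -> int) : \sum_i a i = a i0 + a i1 + a i2.
Proof.
rewrite !big_ord_recr big_ord0 /=.
have E0 : widen_ord (leqnSn 2) (widen_ord (leqnSn 1) ord_max) = i0 by apply: val_inj.
have E1 : widen_ord (leqnSn 2) ord_max = i1 by apply: val_inj.
have E2 : ord_max = i2 by apply: val_inj.
rewrite E0 E1 E2; lia.
Qed.

Lemma key (F : finFieldType) (g : 'M[{poly F}]_3) a b :
  GL3A g -> sameset (img g (DL a)) (DL b) ->
  (\sum_r a r = \sum_r b r) /\ (forall r s, bnd (g r s) (a s - b r)).
Proof.
move=> hg hs.
have sub : forall x, DL a x -> DL b (mxact g x).
  by move=> x hx; apply/hs; exists x.
have bg := incl_bnd sub.
have [c nc dc] := GL3A_det hg.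
have sub' : forall y, DL b y -> DL a (mxact (\adj g) y).
  move=> y /hs [x [hx ->]]; rewrite mxactM -mulmxE mul_adj_mx dc mxact_scalar.
  by move=> r i hi; rewrite hx ?mulr0.
have ba := incl_bnd sub'.
split => //.
have d1 : bnd (\det g) (\sum_i a i - \sum_i b i) by apply: det_bnd.
have d2 : bnd (\det (\adj g)) (\sum_i b i - \sum_i a i) by apply: det_bnd.
rewrite dc in d1; have e1 := bnd_C_ge0 nc d1.
have dadj : \det (\adj g) = (c ^+ 2)%:P.
  have : \det (\adj g *m g) = \det ((\det g)%:M : 'M_3) by rewrite mul_adj_mx.
  rewrite det_mulmx det_scalar dc => E.
  apply: (mulIf (x := c%:P)); first by rewrite polyC_eq0.
  by rewrite E -polyCM -exprSr rmorphXn.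
rewrite dadj in d2; have e2 := bnd_C_ge0 (expf_neq0 2 nc) d2.
lia.
Qed.

Lemma inv_pow (F : finFieldType) (h : 'M[F]_3) : h \in unitmx -> exists k, invmx h = h ^+ k.
Proof.
move=> hu.
pose N := #|{: 'M[F]_3}|.
pose f := fun i : 'I_N.+1 => h ^+ i.
have : ~~ injectiveb f.
  apply/negP => /injectiveP inj; have := leq_card f inj.
  by rewrite card_ord ltnn.
case/injectivePn => i [j nij E].
have hU : forall m, (h ^+ m) \is a GRing.unit by move=> m; apply: unitrX.
have key : forall i j : nat, (i < j)%N -> h ^+ i = h ^+ j -> exists k, invmx h = h ^+ k.
  move=> i' j' lt E'; exists (j' - i').-1.
  have E1 : h ^+ (j' - i') = 1.
    apply: (mulrI (hU i')); rewrite -exprD subnKC ?(ltnW lt) // mulr1; by [].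
  apply: (mulrI hu).
  have -> : h * invmx h = 1 by rewrite -mulmxE mulmxV.
  by rewrite -exprS prednK ?subn_gt0.
case: (ltngtP i j) => hij.
- exact: key hij E.
- exact: key hij (esym E).
- by case/eqP: nij; apply: val_inj.
Qed.

Definition pat (F : finFieldType) (a : 'I_3 -> int) (h : 'M[F]_3) :=
  forall r s, a s < a r -> h r s = 0.

Lemma pat1 (F : finFieldType) a : pat a (1 : 'M[F]_3).
Proof. move=> r s hrs; rewrite mxE; case: eqP => // E; by rewrite E ltxx in hrs. Qed.

Lemma patM (F : finFieldType) a (A B : 'M[F]_3) : pat a A -> pat a B -> pat a (A * B).
Proof.
move=> hA hB r s hrs; rewrite -mulmxE mxE big1 // => t _.
case: (ltP (a t) (a r)) => h; first by rewrite hA ?mul0r.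
by rewrite hB ?mulr0 //; apply: lt_le_trans hrs h.
Qed.

Lemma patX (F : finFieldType) a (A : 'M[F]_3) k : pat a A -> pat a (A ^+ k).
Proof.
move=> hA; elim: k => [|k IH]; first by rewrite expr0; exact: pat1.
by rewrite exprS; apply: patM.
Qed.

Lemma patV (F : finFieldType) a (h : 'M[F]_3) : h \in unitmx -> pat a h -> pat a (invmx h).
Proof. by move=> hu hp; have [k ->] := inv_pow hu; apply: patX. Qed.

Lemma const_sub (F : finFieldType) a (h : 'M[F]_3) x :
  pat a h -> DL a x -> DL a (mxact (map_mx polyC h) x).
Proof.
move=> hp hx r i hi; rewrite mxact_const big1 // => s _.
case: (ltP i (a s)) => his; first by rewrite hx ?mulr0.
by rewrite hp ?mul0r //; apply: le_lt_trans his hi.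
Qed.

Lemma const_same (F : finFieldType) a (h : 'M[F]_3) :
  h \in unitmx -> pat a h -> sameset (img (map_mx polyC h) (DL a)) (DL a).
Proof.
move=> hu hp y; split.
  by case=> x [hx ->]; apply: const_sub.
move=> hy; exists (mxact (map_mx polyC (invmx h)) y); split.
  by apply: const_sub => //; apply: patV.
rewrite mxactM -mulmxE -map_mxM mulmxV // map_scalar_mx mxact_scalar.
by apply: functional_extensionality => r; apply: functional_extensionality => i; rewrite mul1r.
Qed.

Lemma homot_DL (F : finFieldType) n a :
  sameset (homot n (DL a)) (DL (F := F) (fun r => a r + n)).
Proof.
move=> y; split.
  case=> x [hx ->] r i hi; rewrite /shift; apply: hx; lia.
move=> hy; exists (shift (- n) y); split.
  move=> r i hi; rewrite /shift; apply: hy; lia.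
apply: functional_extensionality => r; apply: functional_extensionality => i.
by rewrite /shift; congr y; lia.
Qed.

Lemma same_trans (F : finFieldType) (L1 L2 L3 : lattice F) :
  sameset L1 L2 -> sameset L2 L3 -> sameset L1 L3.
Proof. by move=> h1 h2 y; rewrite h1 h2. Qed.

Lemma same_sym (F : finFieldType) (L1 L2 : lattice F) :
  sameset L1 L2 -> sameset L2 L1.
Proof. by move=> h y; rewrite h. Qed.

Lemma homot_same (F : finFieldType) n (L1 L2 : lattice F) :
  sameset L1 L2 -> sameset (homot n L1) (homot n L2).
Proof. by move=> h y; split; case=> x [hx ->]; exists x; split => //; apply/h. Qed.

Lemma GT (F : finFieldType) j k (h : 'M[F]_3) :
  pr_stab j k h <-> h \in unitmx /\ pat (dexp j k) h.
Proof.
set d := dexp j k.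
split.
  case=> g [[hg [n hn]] <-].
  have hs : sameset (img g (DL d)) (DL (fun r => d r + n)).
    exact: same_trans hn (homot_DL _ _).
  have [hsum hb] := key hg hs.
  move: hsum; rewrite !sum3 => hsum.
  have n0 : n = 0 by lia.
  split.
    have [c nc dc] := GL3A_det hg.
    rewrite unitmxE /pr (det_map_mx (horner_eval 0)) /= dc horner_evalE hornerC.
    by rewrite unitfE.
  move=> r s hrs; rewrite /pr mxE horner_coef0; apply: hb; lia.
case=> hu hp; exists (map_mx polyC h); split; last first.
  by apply/matrixP => r s; rewrite !mxE hornerC.
split; first by rewrite /GL3A map_unitmx.
exists 0; apply: (same_trans (const_same hu hp)).
apply: same_sym; apply: (same_trans (homot_DL _ _)).
have -> : (fun r => d r + 0) = d by apply: functional_extensionality => r; rewrite addr0.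
by move=> y.
Qed.

Lemma ord3_all (P : 'I_3 -> Prop) : P i0 -> P i1 -> P i2 -> forall r, P r.
Proof.
move=> h0 h1 h2 [[|[|[|m]]] hm] //.
- by have -> : Ordinal hm = i0 by apply: val_inj.
- by have -> : Ordinal hm = i1 by apply: val_inj.
- by have -> : Ordinal hm = i2 by apply: val_inj.
Qed.

Ltac patsolve := apply: ord3_all; apply: ord3_all; rewrite /dexp /= => H; try (by []); lia.

Lemma part1 (F : finFieldType) (h : 'M[F]_3) : pr_stab 0 0 h <-> h \in unitmx.
Proof.
rewrite GT; split; first by case.
move=> hu; split => //; move=> r s; move: r s.
patsolve.
Qed.

Lemma part2 (F : finFieldType) k : (0 < k)%N -> forall h : 'M[F]_3, pr_stab 0 k h <-> inP0 h.
Proof.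
move=> hk h; rewrite GT /inP0; split.
  case=> hu hp; split => //; split; apply: hp; rewrite /dexp /=; lia.
case=> hu [h20 h21]; split => //; move=> r s; move: r s.
patsolve.
Qed.

Lemma part3 (F : finFieldType) j : (0 < j)%N -> forall h : 'M[F]_3, pr_stab j j h <-> inP2 h.
Proof.
move=> hk h; rewrite GT /inP2; split.
  case=> hu hp; split => //; split; apply: hp; rewrite /dexp /=; lia.
case=> hu [h10 h20]; split => //; move=> r s; move: r s.
patsolve.
Qed.

Lemma part4 (F : finFieldType) j k : (0 < j)%N -> (j < k)%N ->
  forall h : 'M[F]_3, pr_stab j k h <-> inB h.
Proof.
move=> hj hk h; rewrite GT /inB; split.
  case=> hu hp; split => //; split; [|split]; apply: hp; rewrite /dexp /=; lia.
case=> hu [h10 [h20 h21]]; split => //; move=> r s; move: r s.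
patsolve.
Qed.

Lemma dexp_sum j k (n : int) :
  \sum_r (dexp j k r + n) = j%:Z + k%:Z + n + n + n.
Proof. rewrite sum3 /dexp /=; lia. Qed.

Lemma ssup_DL (F : finFieldType) (L1 L2 : lattice F) a b :
  ssup L1 L2 -> sameset L1 (DL a) -> sameset L2 (DL b) ->
  \sum_r a r < \sum_r b r.
Proof.
move=> [inc [y [h1 h2]]] s1 s2.
have le : forall r, a r <= b r.
  move=> r; case: (leP (a r) (b r)) => // lt.
  have : DL a (ev F r (b r)) by apply/s1; apply: inc; apply/s2; exact: ev_DL.
  move=> /(_ r (b r) lt); rewrite /ev !eqxx /= => /eqP; by rewrite oner_eq0.
rewrite !sum3.
have := le i0; have := le i1; have := le i2.
case: (ltP (a i0) (b i0)) => c0; first lia.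
case: (ltP (a i1) (b i1)) => c1; first lia.
case: (ltP (a i2) (b i2)) => c2; first lia.
exfalso; apply: h2; apply/s2; move: (s1 y) => [/(_ h1) hy _].
have hb : forall r, b r <= a r by apply: ord3_all.
move=> r i hi; apply: hy; exact: lt_le_trans hi (hb r).
Qed.

Lemma chain_lt (V : nat -> int) N : (forall i, (i.+1 < N)%N -> V i < V i.+1) ->
  forall i j, (i < j)%N -> (j < N)%N -> V i < V j.
Proof.
move=> H i; elim=> [|j IH] // hij hj.
case: (ltngtP i j) => c.
- apply: lt_trans (IH c (ltnW hj)) (H _ hj).
- by move: hij; rewrite ltnS leqNgt c.
- by rewrite c; apply: H.
Qed.

Lemma maps_sum (F : finFieldType) (g : 'M[{poly F}]_3) (v v' : nat * nat) :
  GL3A g -> maps_to g v v' -> exists n : int,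
    v.1%:Z + v.2%:Z = v'.1%:Z + v'.2%:Z + n + n + n.
Proof.
move=> hg [n hn].
have hs : sameset (img g (DL (dexp v.1 v.2))) (DL (fun r => dexp v'.1 v'.2 r + n)).
  exact: same_trans hn (homot_DL _ _).
have [hsum _] := key hg hs.
exists n; move: hsum; rewrite dexp_sum.
have -> : \sum_r dexp v.1 v.2 r = \sum_r (dexp v.1 v.2 r + 0).
  by apply: eq_bigr => r _; rewrite addr0.
rewrite dexp_sum; lia.
Qed.

Lemma simplex_types (F : finFieldType) (w : seq (nat * nat)) (g : 'M[{poly F}]_3) v v' :
  is_simplex F w -> GL3A g -> v \in w -> v' \in w -> maps_to g v v' -> v = v'.
Proof.
move=> [_ [s [ns [pe [sz [ch last]]]]]] hg vw v'w hm.
have [n hn] := maps_sum hg hm.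
set V := fun i => (nth (0%N, 0%N) s i).1%:Z + (nth (0%N, 0%N) s i).2%:Z
                  + nth 0 ns i + nth 0 ns i + nth 0 ns i.
have sL : forall i, sameset (homot (nth 0 ns i) (lat (F := F) (nth (0%N, 0%N) s i).1
                                                 (nth (0%N, 0%N) s i).2))
                 (DL (fun r => dexp (nth (0%N, 0%N) s i).1 (nth (0%N, 0%N) s i).2 r + nth 0 ns i)).
  move=> i; exact: homot_DL.
have step : forall i, (i.+1 < size s)%N -> V i < V i.+1.
  move=> i hi; have := ssup_DL (ch i hi) (sL i) (sL i.+1).
  by rewrite !dexp_sum.
have lst : V (size s).-1 < V 0%N + 3.
  have s0 : sameset (homot 1 (homot (nth 0 ns 0) (lat (F := F) (nth (0%N, 0%N) s 0).1
                                                 (nth (0%N, 0%N) s 0).2)))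
       (DL (fun r => (dexp (nth (0%N, 0%N) s 0).1 (nth (0%N, 0%N) s 0).2 r + nth 0 ns 0) + 1)).
    exact: same_trans (homot_same 1 (sL 0%N)) (homot_DL _ _).
  have := ssup_DL last (sL _) s0.
  rewrite !dexp_sum.
  have -> : \sum_r ((dexp (nth (0%N, 0%N) s 0).1 (nth (0%N, 0%N) s 0).2 r + nth 0 ns 0) + 1)
       = \sum_r (dexp (nth (0%N, 0%N) s 0).1 (nth (0%N, 0%N) s 0).2 r + (nth 0 ns 0 + 1)).
    by apply: eq_bigr => r _; rewrite addrA.
  rewrite dexp_sum /V; lia.
have vs : v \in s by rewrite (perm_mem pe).
have v's : v' \in s by rewrite (perm_mem pe).
set a := index v s; set b := index v' s.
have ha : (a < size s)%N by rewrite index_mem.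
have hb : (b < size s)%N by rewrite index_mem.
have na : nth (0%N, 0%N) s a = v by rewrite nth_index.
have nb : nth (0%N, 0%N) s b = v' by rewrite nth_index.
have cl := chain_lt step.
have top : forall i, (i < size s)%N -> V i <= V (size s).-1.
  move=> i hi; case: (ltnP i (size s).-1) => c.
    by apply: ltW; apply: cl => //; rewrite prednK // (leq_ltn_trans _ hi).
  have -> : i = (size s).-1 by apply/eqP; rewrite eqn_leq c -ltnS prednK // (leq_ltn_trans _ hi).
  by [].
have bot : forall i, (i < size s)%N -> V 0%N <= V i.
  move=> i hi; case: i hi => // i hi; apply: ltW; exact: cl.
case: (ltngtP a b) => c.
- have h1 := cl _ _ c hb; have h2 := top _ hb; have h3 := bot _ ha.
  move: h1 h2 h3 lst hn; rewrite /V na nb; lia.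
- have h1 := cl _ _ c ha; have h2 := top _ ha; have h3 := bot _ hb.
  move: h1 h2 h3 lst hn; rewrite /V na nb; lia.
- by rewrite -na -nb c.
Qed.

Lemma const_stab (F : finFieldType) j k (h : 'M[F]_3) :
  h \in unitmx -> pat (dexp j k) h -> stab_vertex j k (map_mx polyC h).
Proof.
move=> hu hp.
split; first by rewrite /GL3A map_unitmx.
exists 0; apply: (same_trans (const_same hu hp)).
apply: same_sym; apply: (same_trans (homot_DL _ _)).
have -> : (fun r => dexp j k r + 0) = dexp j k by apply: functional_extensionality => r; rewrite addr0.
by move=> y.
Qed.

Theorem corollary2p10 (F : finFieldType) :
  (forall h : 'M[F]_3, pr_stab 0 0 h <-> h \in unitmx) /\
  (forall k : nat, (0 < k)%N -> forall h : 'M[F]_3, pr_stab 0 k h <-> inP0 h) /\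
  (forall j : nat, (0 < j)%N -> forall h : 'M[F]_3, pr_stab j j h <-> inP2 h) /\
  (forall j k : nat, (0 < j)%N -> (j < k)%N ->
     forall h : 'M[F]_3, pr_stab j k h <-> inB h) /\
  (forall w : seq (nat * nat),
     (2 <= size w)%N -> all (fun v => (v.1 <= v.2)%N) w -> is_simplex F w ->
     forall h : 'M[F]_3,
       (exists g, stab_simplex w g /\ pr g = h) <->
       (forall v, v \in w -> pr_stab v.1 v.2 h)).
Proof.
split; first exact: part1.
split; first exact: part2.
split; first exact: part3.
split; first exact: part4.
move=> w sw _ hs h; split.
  case=> g [[hg hw] <-] v vw.
  have [v' v'w hm] := hw v vw.
  have E := simplex_types hs hg vw v'w hm; subst v'.
  by exists g; split => //; split.
move=> H.
case: w sw hs H => [|v0 w'] // sw hs H.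
have [hu _] := (GT _ _ _).1 (H v0 (mem_head _ _)).
exists (map_mx polyC h); split; last first.
  by apply/matrixP => r s; rewrite !mxE hornerC.
split; first by rewrite /GL3A map_unitmx.
move=> v vw; exists v => //.
have [_ hp] := (GT _ _ _).1 (H v vw).
by case: (const_stab hu hp) => _; case: v {vw hp}.
Qed.
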